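(* Let $Y(0),Y(1)$ be real potential outcomes and $X$ a random vector in $\mathbb{R}^{d_X}$ with support $\mathcal{X}=\mathcal{X}_0\cup\mathcal{X}_1$, $\mathcal{X}_0\cap\mathcal{X}_1=\emptyset$, with $D=1\{X\in\mathcal{X}_1\}$ and $Y=DY(1)+(1-D)Y(0)$. Fix $q\in[0,1]$. Suppose that for $d\in\{0,1\}$ the function $x\mapsto Q_{Y(d)|X}(q|x)$ is continuous on $\mathcal{X}$, and that for all $x_1,x_2\in\mathcal{X}$, $$Q_{Y(0)|X}(q|x_1)\leq Q_{Y(0)|X}(q|x_2)\iff Q_{Y(1)|X}(q|x_1)\leq Q_{Y(1)|X}(q|x_2).$$ Let $\mathcal{F}=\mathrm{cl}(\mathrm{int}(\mathcal{X}_1))\cap\mathrm{cl}(\mathrm{int}(\mathcal{X}_0))$. Then for each $d\in\{0,1\}$ there is a unique continuous function $g_{d,q}$ on $\mathcal{X}_d\cup\mathcal{F}$ with $g_{d,q}(x)=Q_{Y|X}(q|x)$ for all $x\in\mathcal{X}_d$. Moreover, if for some $d$ and some $x\in\mathcal{X}_d$ there exists $x^*\in\mathcal{F}$ with $Q_{Y|X}(q|x)=g_{d,q}(x^* )$, then $Q_{Y(1-d)|X}(q|x)=g_{1-d,q}(x^* )$ and $Q_{Y(d)|X}(q|x)=g_{d,q}(x^* )$.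
   Context: $Q_{Y(d)|X}(q|x)$ denotes the $q$-th conditional quantile of $Y(d)$ given $X=x$ (the continuous version); for $x\in\mathcal{X}_d$, $Q_{Y|X}(q|x)$ is understood as $Q_{Y(d)|X}(q|x)$. *)

(* Defs.v *)
From HB Require Import structures.
From mathcomp Require Import all_boot all_order all_algebra.
From mathcomp Require Import all_classical all_reals all_analysis.
Set Implicit Arguments. Unset Strict Implicit. Unset Printing Implicit Defensive.
Import Order.TTheory GRing.Theory Num.Theory.
Import numFieldNormedType.Exports.
Local Open Scope classical_set_scope.
Local Open Scope ring_scope.

Definition frontierF {R : realType} {n : nat} (X0 X1 : set 'rV[R]_n) : set 'rV[R]_n :=
  closure (interior X1) `&` closure (interior X0).

Definition Xreg {R : realType} {n : nat} (X0 X1 : set 'rV[R]_n) (d : bool) : set 'rV[R]_n :=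
  if d then X1 else X0.

(* Q_{Y|X}(q|x) for the observed outcome Y = D Y(1) + (1-D) Y(0), D = 1{X ∈ X1}:
   on X_d it is Q_{Y(d)|X}(q|x).  Q d q x stands for Q_{Y(d)|X}(q|x). *)
Definition QYX {R : realType} {n : nat} (X1 : set 'rV[R]_n)
  (Q : bool -> R -> 'rV[R]_n -> R) (q : R) (x : 'rV[R]_n) : R :=
  Q (x \in X1) q x.

(* Main.v *)
Require Import Defs.
From HB Require Import structures.
From mathcomp Require Import all_boot all_order all_algebra.
From mathcomp Require Import all_classical all_reals all_analysis.
Import Order.TTheory GRing.Theory Num.Theory.
Import numFieldNormedType.Exports.
Local Open Scope classical_set_scope.
Local Open Scope ring_scope.

Theorem theoremB1 (R : realType) (dX : nat)
  (Xs X0 X1 : set 'rV[R]_dX) (Q : bool -> R -> 'rV[R]_dX -> R) (q : R) :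
  closed Xs ->
  Xs = X0 `|` X1 ->
  X0 `&` X1 = set0 ->
  0 <= q <= 1 ->
  (forall d : bool, {within Xs, continuous (Q d q)}) ->
  (forall x1 x2, Xs x1 -> Xs x2 ->
     (Q false q x1 <= Q false q x2 <-> Q true q x1 <= Q true q x2)) ->
  exists g : bool -> 'rV[R]_dX -> R,
    (forall d : bool,
       {within Xreg X0 X1 d `|` frontierF X0 X1, continuous (g d)} /\
       (forall x, Xreg X0 X1 d x -> g d x = QYX X1 Q q x) /\
       (forall h : 'rV[R]_dX -> R,
          {within Xreg X0 X1 d `|` frontierF X0 X1, continuous h} ->
          (forall x, Xreg X0 X1 d x -> h x = QYX X1 Q q x) ->
          forall x, (Xreg X0 X1 d `|` frontierF X0 X1) x -> h x = g d x)) /\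
    (forall (d : bool) (x xs : 'rV[R]_dX),
       Xreg X0 X1 d x -> frontierF X0 X1 xs ->
       QYX X1 Q q x = g d xs ->
       Q (~~ d) q x = g (~~ d) xs /\ Q d q x = g d xs).
Proof.
move=> clXs XsE X01 _ Qc Qmono.
have FXs : frontierF X0 X1 `<=` Xs.
  move=> x [x1 _]; have : closure X1 x by apply: (closureS (@interior_subset _ X1)).
  have -> : X1 = Xs `&` X1 by rewrite XsE; apply/esym/setIidr => y Hy; right.
  by move=> /(closureS (@subIsetl _ Xs X1)); rewrite -(proj1 (closure_id _) clXs).
have RXs : forall d, Xreg X0 X1 d `<=` Xs.
  by move=> [] y /= Hy; rewrite XsE; [right|left].
have QYXd : forall d x, Xreg X0 X1 d x -> QYX X1 Q q x = Q d q x.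
  move=> [] x /= Hx; rewrite /QYX.
    by have -> : (x \in X1) = true by apply/mem_set.
  have -> : (x \in X1) = false.
    apply/negbTE/negP => /set_mem H1.
    by have : (X0 `&` X1) x by []; rewrite X01.
  by [].
exists (fun d => Q d q); split.
  move=> d; split.
    apply: (continuous_subspaceW _ (Qc d)) => y [/RXs|/FXs] //.
  split; first by move=> x /QYXd ->.
  move=> h hc hE x [Hx|Fx]; first by rewrite hE // (QYXd d).
  have clx : closure (Xreg X0 X1 d) x.
    case: Fx => H1 H0; case: (d) => /=.
      exact: (closureS (@interior_subset _ X1)).
    exact: (closureS (@interior_subset _ X0)).
  pose A := Xreg X0 X1 d `|` frontierF X0 X1.
  have Ax : A x by right.
  have sub : within (Xreg X0 X1 d) (nbhs x) `=>` within A (nbhs x).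
    by apply: within_subset => y Hy; left.
  have QcA : {within A, continuous (Q d q)}.
    apply: (continuous_subspaceW _ (Qc d)) => y [/RXs|/FXs] //.
  move/subspace_continuousP : hc => /(_ x Ax) hc.
  move/subspace_continuousP : QcA => /(_ x Ax) QcA.
  have PG : ProperFilter (within (Xreg X0 X1 d) (nbhs x)) by exact: within_nbhs_proper.
  have h1 : h @ within (Xreg X0 X1 d) (nbhs x) --> h x.
    exact: (cvg_trans (cvg_fmap2 sub) hc).
  have h2 : Q d q @ within (Xreg X0 X1 d) (nbhs x) --> Q d q x.
    exact: (cvg_trans (cvg_fmap2 sub) QcA).
  have h3 : h @ within (Xreg X0 X1 d) (nbhs x) --> Q d q x.
    apply: cvg_trans h2; apply: fmap_within_eq => y /set_mem Hy.
    by rewrite hE // (QYXd d).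
  exact: (cvg_unique _ h1 h3).
move=> d x xs Hx Fxs; rewrite (QYXd d) // => Heq; split => //.
have Xx := RXs d x Hx; have Xxs := FXs xs Fxs.
have [le1 le2] : Q d q x <= Q d q xs /\ Q d q xs <= Q d q x by rewrite Heq.
apply/eqP; rewrite eq_le; apply/andP; split.
  by case: d {Hx Heq} le1 le2 => /= l1 l2; apply/(Qmono _ _ Xx Xxs).
by case: d {Hx Heq} le1 le2 => /= l1 l2; apply/(Qmono _ _ Xxs Xx).
Qed.
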